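(* Let $\Omega$ be a finite-dimensional real Euclidean space and $f_1,\dots,f_N\colon\Omega\to\mathbb{R}$ convex, each $\mu$-strongly convex and $L$-smooth ($\mu,L>0$), $\kappa=L/\mu$. Run DualFL (described in the context) with $\rho\in[0,\nu/L]$ and $\nu\in(0,\mu]$, where the local iterates are required to satisfy, for some $\gamma>0$, $\Gamma^{n,j}(\theta_j^{(n+1)})\le\frac1N\left(\frac{1-\sqrt\rho}{1+\gamma}\right)^n$ for all $j,n$. Suppose each local problem is solved by an optimal first-order algorithm of iteration complexity $\mathcal{O}(\sqrt\kappa\log(1/\epsilon))$ (i.e. the number of iterations needed to reach primal-dual gap at most $\epsilon$ is $\mathcal{O}(\sqrt\kappa\log(1/\epsilon))$). Then the number $M_n$ of inner iterations at the $n$-th epoch satisfies \[ M_n=\mathcal{O}\left(\sqrt\kappa\left(\log\big(N(1+\gamma)^n\big)+n\sqrt\rho\right)\right)=\mathcal{O}\left(\sqrt\kappa\log\frac{N(1+\gamma)^n}{\epsilon_{\mathrm{out}}}\right), \] where $\epsilon_{\mathrm{out}}>0$ is the target accuracy of the outer iterations (so that the number of outer iterations is $\mathcal{O}((1/\sqrt\rho)\log(1/\epsilon_{\mathrm{out}}))$). In particular, letting $\gamma\to0^+$, $M_n=\mathcal{O}\left(\sqrt\kappa\log\frac{N}{\epsilon_{\mathrm{out}}}\right)$.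
   Context: $h$ is $\mu$-strongly convex if $h-\frac\mu2\|\cdot\|^2$ is convex; $L$-smooth means differentiable with $L$-Lipschitz gradient; $h^*$ is the Legendre--Fenchel conjugate. DualFL with hyperparameters $\rho\ge0$, $\nu>0$: set $\theta^{(0)}=\theta_j^{(0)}=0$, $\zeta_j^{(0)}=\zeta_j^{(-1)}=0$, $t_0=1$. For $n=0,1,\dots$: each client $j$ runs $M_n$ iterations of a local solver to get an approximate minimizer $\theta_j^{(n+1)}$ of $E^{n,j}(\theta)=f_j(\theta)-\nu\langle\zeta_j^{(n)},\theta\rangle$; $\theta^{(n+1)}=\frac1N\sum_j\theta_j^{(n+1)}$; $t_{n+1}=\frac{1-\rho t_n^2+\sqrt{(1-\rho t_n^2)^2+4t_n^2}}{2}$, $\beta_n=\frac{t_n-1}{t_{n+1}}\cdot\frac{1-t_{n+1}\rho}{1-\rho}$; $\zeta_j^{(n+1)}=(1+\beta_n)(\zeta_j^{(n)}+\theta^{(n+1)}-\theta_j^{(n+1)})-\beta_n(\zeta_j^{(n-1)}+\theta^{(n)}-\theta_j^{(n)})$. Primal-dual gap: $g_j=f_j-\frac\nu2\|\cdot\|^2$, $E^{n,j}_{\mathrm d}(\xi)=g_j^*(\xi)+\frac1{2\nu}\|\xi-\nu\zeta_j^{(n)}\|^2$, $\Gamma^{n,j}(\theta)=E^{n,j}(\theta)+E^{n,j}_{\mathrm d}(\nu(\zeta_j^{(n)}-\theta))$.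
   Formalization: ρ ≤ r for a fixed r < 1, with the constants in the O-bounds depending on r; Mₙ is the least inner-iteration count meeting every client's gap requirement, and the γ → 0⁺ bound is omitted. Apart from conventions, each condition added here is assumed in the paper as well or is needed for the statement above to hold. *)

(* Defs.v *)
From HB Require Import structures.
From mathcomp Require Import all_boot all_order all_algebra.
From mathcomp Require Import all_classical all_reals all_analysis.
Set Implicit Arguments. Unset Strict Implicit. Unset Printing Implicit Defensive.
Import Order.TTheory GRing.Theory Num.Theory.
Import numFieldNormedType.Exports.
Local Open Scope ring_scope.

Section DualFLDefs.
Variables (R : realType) (d : nat).
Local Notation V := 'rV[R]_d.

Definition dfl_dot (u v : V) : R := \sum_(i < d) u 0 i * v 0 i.
Definition dfl_norm (v : V) : R := Num.sqrt (dfl_dot v v).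

Definition dfl_convex (h : V -> R) : Prop :=
  forall (x y : V) (t : R), 0 <= t <= 1 ->
    h (t *: x + (1 - t) *: y) <= t * h x + (1 - t) * h y.

Definition dfl_strongly_convex (mu : R) (h : V -> R) : Prop :=
  dfl_convex (fun x => h x - mu / 2 * dfl_norm x ^+ 2).

Definition dfl_smooth (L : R) (h : V -> R) : Prop :=
  exists grad : V -> V,
    (forall x, differentiable h x /\ forall v, 'd h x v = dfl_dot (grad x) v) /\
    (forall x y, dfl_norm (grad x - grad y) <= L * dfl_norm (x - y)).

Definition dfl_conj (h : V -> R) (xi : V) : \bar R :=
  ereal_sup [set ((dfl_dot xi th - h th)%:E) | th in [set: V]].

Definition dfl_E (nu : R) (h : V -> R) (zeta th : V) : R :=
  h th - nu * dfl_dot zeta th.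

Definition dfl_g (nu : R) (h : V -> R) (th : V) : R :=
  h th - nu / 2 * dfl_norm th ^+ 2.

Definition dfl_Ed (nu : R) (h : V -> R) (zeta xi : V) : \bar R :=
  (dfl_conj (dfl_g nu h) xi + (1 / (2 * nu) * dfl_norm (xi - nu *: zeta) ^+ 2)%:E)%E.

Definition dfl_gap (nu : R) (h : V -> R) (zeta th : V) : \bar R :=
  ((dfl_E nu h zeta th)%:E + dfl_Ed nu h zeta (nu *: (zeta - th)))%E.

Definition dfl_beta (rho : R) (t : nat -> R) (n : nat) : R :=
  (t n - 1) / t n.+1 * ((1 - t n.+1 * rho) / (1 - rho)).

Definition dfl_zprev (N : nat) (zeta : nat -> 'I_N -> V) (n : nat) (j : 'I_N) : V :=
  if n is n'.+1 then zeta n' j else 0.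

(* A run of DualFL.  solver j zeta th0 k is the k-th iterate of client j's local
   solver applied to E^{n,j} (determined by f_j, nu and zeta), started from th0
   (warm start th0 = theta_j^(n)).  M n is the number of inner iterations at
   epoch n: the least number of iterations after which every client satisfies
   the gap requirement Gamma^{n,j}(theta_j^(n+1)) <= target n. *)
Record dualfl_run (N : nat) (f : 'I_N -> V -> R) (nu rho : R)
    (target : nat -> R) (solver : 'I_N -> V -> V -> nat -> V)
    (theta : nat -> V) (thj : nat -> 'I_N -> V) (zeta : nat -> 'I_N -> V)
    (t : nat -> R) (M : nat -> nat) : Prop := {
  dfl_theta0 : theta 0 = 0;
  dfl_thj0 : forall j, thj 0 j = 0;
  dfl_zeta0 : forall j, zeta 0 j = 0;
  dfl_t0 : t 0 = 1;
  dfl_tS : forall n, t n.+1 =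
    (1 - rho * t n ^+ 2 + Num.sqrt ((1 - rho * t n ^+ 2) ^+ 2 + 4 * t n ^+ 2)) / 2;
  dfl_local : forall n j, thj n.+1 j = solver j (zeta n j) (thj n j) (M n);
  dfl_avg : forall n, theta n.+1 = N%:R^-1 *: \sum_(j < N) thj n.+1 j;
  dfl_zetaS : forall n j, zeta n.+1 j =
    (1 + dfl_beta rho t n) *: (zeta n j + theta n.+1 - thj n.+1 j)
    - dfl_beta rho t n *: (dfl_zprev zeta n j + theta n - thj n j);
  dfl_gap_ok : forall n j,
    (dfl_gap nu (f j) (zeta n j) (thj n.+1 j) <= (target n)%:E)%E;
  dfl_M_min : forall n m, (m < M n)%N -> exists j,
    ((target n)%:E < dfl_gap nu (f j) (zeta n j) (solver j (zeta n j) (thj n j) m))%E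
}.

End DualFLDefs.

(* Main.v *)
Set Warnings "-all".
Require Import Defs.
From HB Require Import structures.
From mathcomp Require Import all_boot all_order all_algebra.
From mathcomp Require Import all_classical all_reals all_analysis.
From mathcomp Require Import ring lra.
Import Order.TTheory GRing.Theory Num.Theory.
Import numFieldNormedType.Exports.
Local Open Scope ring_scope.
Local Open Scope classical_set_scope.

Section A.
Variables (R : realType) (d : nat).
Local Notation V := 'rV[R]_d.

Lemma dot_ge0 (u : V) : 0 <= dfl_dot u u.
Proof. by rewrite /dfl_dot; apply: sumr_ge0 => i _; rewrite -expr2 sqr_ge0. Qed.

Lemma norm2E (u : V) : dfl_norm u ^+ 2 = dfl_dot u u.
Proof. by rewrite /dfl_norm sqr_sqrtr // dot_ge0. Qed.

Lemma dot_expand (t : R) (w x : V) :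
  dfl_dot (t *: w + x) (t *: w + x) =
  t ^+ 2 * dfl_dot w w + 2 * t * dfl_dot x w + dfl_dot x x.
Proof.
rewrite /dfl_dot mulr_sumr mulr_sumr -!big_split /=; apply: eq_bigr => i _.
rewrite !mxE; ring.
Qed.

Lemma quot_le (f : V -> R) mu (x w : V) (t : R) :
  dfl_strongly_convex mu f -> 0 < t <= 1 ->
  t^-1 * (f (t *: w + x) - f x) <=
   (f (w + x) - mu / 2 * dfl_dot (w + x) (w + x)) - (f x - mu / 2 * dfl_dot x x)
   + mu * dfl_dot x w + t * (mu / 2 * dfl_dot w w).
Proof.
move=> hc /andP[t0 t1].
have := hc (w + x) x t; rewrite (ltW t0) t1 => /(_ isT) /=.
have -> : t *: (w + x) + (1 - t) *: x = t *: w + x.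
  by rewrite scalerDr scalerBl scale1r -addrA [t *: x + _]addrC subrK.
rewrite !norm2E.
have := dot_expand t w x; have := dot_expand 1 w x; rewrite scale1r => -> ->.
move=> H.
rewrite ler_pdivrMl //.
nra.
Qed.

Lemma d_le (f : V -> R) mu (x w : V) :
  dfl_strongly_convex mu f -> 0 <= mu -> differentiable f x ->
  'd f x w <=
   (f (w + x) - mu / 2 * dfl_dot (w + x) (w + x)) - (f x - mu / 2 * dfl_dot x x)
   + mu * dfl_dot x w.
Proof.
move=> hc mu0 df.
set B := (X in _ <= X).
set c := mu / 2 * dfl_dot w w.
have c0 : 0 <= c by rewrite /c mulr_ge0 ?dot_ge0 // divr_ge0.
pose g := fun h : R => h^-1 *: ((f \o shift x) (h *: w) - f x).
have cg : g @ 0^' --> 'D_w f x by exact: diff_derivable.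
have cgr : g @ 0^'+ --> 'D_w f x.
  move=> A /cg /nbhs_ballP [_ /posnumP[e] xe_A].
  by exists e%:num => //= y xe_y /gt_eqF/negbT/xe_A; exact.
have key : forall del, 0 < del <= 1 -> 'd f x w <= B + del * c.
  move=> del /andP[del0 del1].
  rewrite -deriveE // -(cvg_lim _ cgr) //.
  apply: limr_le; first by apply/cvg_ex; exists ('D_w f x).
  near=> t.
  have t0 : 0 < t by near: t; exact: nbhs_right_gt.
  have tdel : t <= del by near: t; exact: nbhs_right_le.
  rewrite /g /= /B.
  change (t^-1 * (f (t *: w + x) - f x) <= B + del * c).
  have q := @quot_le f mu x w t hc.
  rewrite t0 (le_trans tdel del1) in q.
  apply: (le_trans (q isT)).
  by rewrite lerD2l ler_wpM2r.
  
apply/negPn/negP; rewrite -ltNge => H.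
pose del := Num.min 1 ((('d f x w) - B) / (2 * (c + 1))).
have c1 : 0 < c + 1 by rewrite ltr_wpDl.
have del0 : 0 < del by rewrite /del lt_min ltr01 /= divr_gt0 ?subr_gt0 // mulr_gt0.
have := key del; rewrite del0 ge_min lexx /= => /(_ isT).
have : del <= (('d f x w) - B) / (2 * (c + 1)) by rewrite /del ge_min lexx orbT.
rewrite ler_pdivlMr ?mulr_gt0 // => hd hk.
nra.
Unshelve. all: by end_near.
Qed.

Lemma dot0l (u : V) : dfl_dot 0 u = 0.
Proof. by rewrite /dfl_dot big1 // => i _; rewrite mxE mul0r. Qed.

Lemma dotNr (u v : V) : dfl_dot u (- v) = - dfl_dot u v.
Proof. by rewrite /dfl_dot -sumrN; apply: eq_bigr => i _; rewrite mxE mulrN. Qed.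

Lemma dotBl (u v w : V) : dfl_dot (u - v) w = dfl_dot u w - dfl_dot v w.
Proof.
by rewrite /dfl_dot -sumrB; apply: eq_bigr => i _; rewrite !mxE mulrBl.
Qed.

Lemma dot_delta (i0 : 'I_d) (u : V) : dfl_dot u (delta_mx 0 i0) = u 0 i0.
Proof.
rewrite /dfl_dot (bigD1 i0) //= big1 ?addr0.
  by rewrite mxE !eqxx mulr1.
by move=> i /negbTE ni; rewrite mxE ni andbF mulr0.
Qed.

Lemma coord_le_norm (i0 : 'I_d) (u : V) : `|u 0 i0| <= dfl_norm u.
Proof.
rewrite /dfl_norm -sqrtr_sqr ler_sqrt ?dot_ge0 //.
rewrite /dfl_dot (bigD1 i0) //= -expr2 lerDl.
by apply: sumr_ge0 => i _; rewrite -expr2 sqr_ge0.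
Qed.

Lemma mu_le_L (i0 : 'I_d) (f : V -> R) mu L :
  0 <= mu -> dfl_strongly_convex mu f -> dfl_smooth L f -> mu <= L.
Proof.
move=> mu0 hc [gr [hd hl]].
set e : V := delta_mx 0 i0.
have ee : dfl_dot e e = 1 by rewrite dot_delta mxE !eqxx.
have h1 := @d_le f mu 0 e hc mu0 (proj1 (hd 0)).
have h2 := @d_le f mu e (- e) hc mu0 (proj1 (hd e)).
have E1 := proj2 (hd 0) e. have E2 := proj2 (hd e) (- e).
rewrite E1 in h1. rewrite E2 in h2.
rewrite (addr0 e) (dot0l 0) (dot0l e) ee in h1.
rewrite (addNr e) (dotNr e e) (dotNr (gr e) e) ee (dot0l 0) in h2.
have hb : mu <= dfl_dot (gr e - gr 0) e.
  rewrite (dotBl (gr e) (gr 0) e).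
  move: h1 h2.
  move: (dfl_dot (gr e) e) (dfl_dot (gr 0) e) (f e) (f 0) => a b c d0 h1 h2.
  clear -h1 h2. lra.
apply: (le_trans hb); rewrite dot_delta.
apply: (le_trans (ler_norm _)); apply: (le_trans (coord_le_norm i0 _)).
apply: (le_trans (hl e 0)).
by rewrite subr0 /dfl_norm ee sqrtr1 mulr1.
Qed.
End A.
Lemma rv0_eq0 {R : realType} (v : 'rV[R]_0) : v = 0.
Proof. by apply/matrixP => i []. Qed.

Lemma dot00 (R : realType) (u v : 'rV[R]_0) : dfl_dot u v = 0.
Proof. by rewrite /dfl_dot big_ord0. Qed.

Lemma gap0 (R : realType) (f : 'rV[R]_0 -> R) nu z th :
  dfl_gap nu f z th = 0%:E.
Proof.
rewrite /dfl_gap /dfl_Ed /dfl_conj /dfl_E /dfl_norm !dot00 sqrtr0.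
rewrite (_ : [set _ | th in _] = [set (- dfl_g nu f 0)%:E]); last first.
  apply/seteqP; split => y /=.
    by case => t _ <-; rewrite dot00 (rv0_eq0 (R:=R) t) sub0r.
  by move=> ->; exists 0 => //; rewrite dot00 sub0r.
rewrite ereal_sup1 /dfl_g /dfl_norm dot00 sqrtr0 (rv0_eq0 (R:=R) th).
rewrite -!EFinD; congr (_%:E); ring.
Qed.

Theorem theorem3p5 (R : realType) (C r K : R) :
  0 < C -> 0 <= r < 1 -> 0 < K ->
  exists C' : R, 0 < C' /\
  forall (d N : nat) (f : 'I_N -> 'rV[R]_d -> R) (mu L nu rho gamma : R)
    (solver : 'I_N -> 'rV[R]_d -> 'rV[R]_d -> nat -> 'rV[R]_d)
    (theta : nat -> 'rV[R]_d) (thj zeta : nat -> 'I_N -> 'rV[R]_d)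
    (t : nat -> R) (M : nat -> nat),
    (0 < N)%N -> 0 < mu -> 0 < L ->
    (forall j, dfl_convex (f j)) ->
    (forall j, dfl_strongly_convex mu (f j)) ->
    (forall j, dfl_smooth L (f j)) ->
    0 < nu <= mu -> 0 <= rho <= nu / L -> rho <= r -> 0 < gamma ->
    (* local solver with iteration complexity O(sqrt kappa log(1/eps)) *)
    (forall j (z th0 : 'rV[R]_d) (eps : R), 0 < eps <= 1 ->
       forall k : nat, C * Num.sqrt (L / mu) * (1 + ln (1 / eps)) <= k%:R ->
       (dfl_gap nu (f j) z (solver j z th0 k) <= eps%:E)%E) ->
    dualfl_run f nu rho
      (fun n => N%:R^-1 * ((1 - Num.sqrt rho) / (1 + gamma)) ^+ n)
      solver theta thj zeta t M ->
    forall n : nat,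
      (M n)%:R <= C' * Num.sqrt (L / mu) *
                  (1 + ln (N%:R * (1 + gamma) ^+ n) + n%:R * Num.sqrt rho)
      /\
      (forall eps_out : R, 0 < eps_out <= 1 ->
         n%:R * Num.sqrt rho <= K * ln (1 / eps_out) ->
         (M n)%:R <= C' * Num.sqrt (L / mu) *
                     (1 + ln (N%:R * (1 + gamma) ^+ n / eps_out))).
Proof.
move=> C0 /andP[r0 r1] K0.
have sr1 : Num.sqrt r < 1 by rewrite -sqrtr1 ltr_sqrt.
have sr0 : 0 < 1 - Num.sqrt r by rewrite subr_gt0.
set c := (1 - Num.sqrt r)^-1.
have c1 : 1 <= c by rewrite invf_ge1 // lerBlDr lerDl sqrtr_ge0.
have c0 : 0 < c by apply: lt_le_trans c1.
exists ((C + 1) * c * (1 + K)).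
split; first by rewrite !mulr_gt0 // ?ltr_wpDr // ltW.
move=> d N f mu L nu rho gamma solver theta thj zeta t M N0 mu0 L0 hcv hsc hsm
  /andP[nu0 numu] /andP[rho0 rhoL] rhor g0 hsolv run n.
set s := Num.sqrt (L / mu).
set sr := Num.sqrt rho.
have s0 : 0 <= s by apply: sqrtr_ge0.
have sr0' : 0 <= sr by apply: sqrtr_ge0.
have srle : sr <= Num.sqrt r by rewrite ler_sqrt.
have sr1' : sr < 1 by apply: le_lt_trans sr1.
have q0 : 0 < 1 - sr by rewrite subr_gt0.
have Nr : 1 <= N%:R :> R by rewrite ler1n.
have Nr0 : 0 < N%:R :> R by apply: lt_le_trans Nr.
have g1 : 1 <= 1 + gamma by rewrite lerDl ltW.
have g1' : 0 < 1 + gamma by apply: lt_le_trans g1.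
set eps := N%:R^-1 * ((1 - sr) / (1 + gamma)) ^+ n.
have eps0 : 0 < eps by rewrite mulr_gt0 ?invr_gt0 // exprn_gt0 // divr_gt0.
have eps1 : eps <= 1.
  have qq : 0 <= (1 - sr) / (1 + gamma) by rewrite divr_ge0 // ltW.
  apply: mulr_ile1.
  - by rewrite invr_ge0 ler0n.
  - exact: exprn_ge0.
  - by rewrite invf_le1.
  apply: exprn_ile1 => //.
  rewrite ler_pdivrMr // mul1r; apply: le_trans g1.
  by rewrite lerBlDr lerDl.
set A := ln (N%:R * (1 + gamma) ^+ n).
have X0 : 0 < N%:R * (1 + gamma) ^+ n by rewrite mulr_gt0 // exprn_gt0.
have A0 : 0 <= A by rewrite ln_ge0 // mulr_ege1 // exprn_ege1.
set ell := ln (1 / eps).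
have ell_le : ell <= A + n%:R * sr * c.
  rewrite /ell.
  have -> : 1 / eps = (N%:R * (1 + gamma) ^+ n) * ((1 - sr)^-1) ^+ n.
    rewrite /eps expr_div_n exprVn; field.
    by rewrite !expf_neq0 ?lt0r_neq0 // andbT lt0r_neq0.
  rewrite lnM ?posrE ?exprn_gt0 ?invr_gt0 // lnXn ?invr_gt0 // lerD2l.
  rewrite -[_ *+ n]mulr_natl -mulrA ler_wpM2l ?ler0n //.
  have -> : (1 - sr)^-1 = 1 + ((1 - sr)^-1 - 1) by rewrite addrCA subrr addr0.
  apply: le_trans (le_ln1Dx _) _.
    by rewrite ltrBrDl subrr invr_gt0.
  have -> : (1 - sr)^-1 - 1 = sr * (1 - sr)^-1.
    by field; rewrite lt0r_neq0.
  rewrite ler_wpM2l // lef_pV2 ?posrE //.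
  by rewrite lerB.
have ell0 : 0 <= ell by rewrite ln_ge0 // ler_pdivlMr // mul1r.
set Z := 1 + A + n%:R * sr.
have Z1 : 1 <= Z by rewrite /Z -addrA lerDl addr_ge0 // mulr_ge0.
have Z0 : 0 <= Z by apply: le_trans ler01 Z1.
have C1 : 0 <= C + 1 by rewrite addr_ge0 // ltW.
have Mbound : (M n)%:R <= (C + 1) * c * s * Z.
  case: (posnP (M n)) => [-> | Mpos].
    apply: mulr_ge0 (mulr_ge0 (mulr_ge0 _ (ltW c0)) s0) Z0. by rewrite addr_ge0 // ltW.
  have j0 : 'I_N := Ordinal N0.
  have muL : mu <= L.
    destruct d as [|d'].
      have [j hj] := dfl_M_min run Mpos.
      by rewrite gap0 lte_fin ltNge ltW in hj.
    exact: (@mu_le_L R d'.+1 ord0 (f j0) mu L (ltW mu0) (hsc j0) (hsm j0)).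
  have s1 : 1 <= s.
    rewrite /s -sqrtr1 ler_sqrt; first by rewrite ler_pdivlMr // mul1r.
    by rewrite divr_ge0 // ltW.
  set x := C * s * (1 + ell).
  have x0 : 0 <= x by rewrite /x !mulr_ge0 ?(ltW C0) // addr_ge0.
  have Mk : (M n <= (Num.truncn x).+1)%N.
    rewrite leqNgt; apply/negP => hk.
    have [j hj] := dfl_M_min run hk.
    have := hsolv j (zeta n j) (thj n j) eps; rewrite eps0 eps1 => /(_ isT _ (ltW (truncnS_gt x))).
    move=> hle; have := lt_le_trans hj hle; by rewrite ltxx.
  have Mx : (M n)%:R <= x + 1.
    apply: le_trans (_ : ((Num.truncn x).+1)%:R <= _); first by rewrite ler_nat.
    by rewrite -addn1 natrD lerD2r truncn_le.
  apply: le_trans Mx _.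
  have H1 : 1 + ell <= c * Z.
    have h : 0 <= (c - 1) * (1 + A) by rewrite mulr_ge0 ?subr_ge0 // addr_ge0.
    rewrite /Z; move: h ell_le; clear; lra.
  have H2 : C * s * (1 + ell) <= C * s * (c * Z) by rewrite ler_wpM2l // mulr_ge0 // ltW.
  have H3 : 1 <= s * (c * Z) by rewrite mulr_ege1 // mulr_ege1.
  rewrite /x; move: H2 H3; clear; lra.
split.
  apply: le_trans Mbound _.
  rewrite -!mulrA ler_wpM2l // ler_wpM2l ?(ltW c0) //.
  by rewrite ler_peMl ?mulr_ge0 // lerDl ltW.
move=> e /andP[e0 e1] hPK.
apply: le_trans Mbound _.
have B0 : 0 <= ln (1 / e) by rewrite ln_ge0 // ler_pdivlMr // mul1r.
have -> : ln (N%:R * (1 + gamma) ^+ n / e) = A + ln (1 / e).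
  by rewrite ln_div ?posrE // ln_div ?posrE // ln1 sub0r.
have HZ : Z <= (1 + K) * (1 + (A + ln (1 / e))).
  have h : 0 <= K * (1 + A) by rewrite mulr_ge0 ?addr_ge0 // ltW.
  rewrite /Z; move: h hPK B0; clear; nra.
rewrite -!mulrA ler_wpM2l // ler_wpM2l ?(ltW c0) //.
by rewrite mulrCA ler_wpM2l.
Qed.
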